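(* Let $\hat{\mathcal H}$ be a graph on vertex set $[n]$ with at least one edge that is partially shifted and triangle-free. Then there exist disjoint nonempty sets $X,Y\subset[n]$ with $X\cup Y=[|X|+|Y|]$ such that the edge set of $\hat{\mathcal H}$ is exactly $\{\{x,y\}:x\in X,\ y\in Y\}$.
   Context: A graph $\hat{\mathcal H}$ on $[n]$ is partially shifted if for all distinct $i,j,x\in[n]$ with $x<j$: if $\{i,j\}$ is an edge and $\{x,j\}$ is not an edge, then $\{i,x\}$ is an edge. *)

(* Defs.v *)
From mathcomp Require Import all_boot.
Set Implicit Arguments. Unset Strict Implicit. Unset Printing Implicit Defensive.

(* A simple graph on [n] = {1,...,n} is a symmetric irreflexive relation
   e : rel 'I_n ; the ordinal i : 'I_n stands for the vertex i+1, so the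
   natural order on vertices is the order on ordinals, and the initial
   segment [k] = {1,...,k} is {i : 'I_n | i < k}. *)
Definition simple_graph n (e : rel 'I_n) : Prop :=
  symmetric e /\ irreflexive e.

Definition partially_shifted n (e : rel 'I_n) : Prop :=
  forall i j x : 'I_n, i != j -> i != x -> x != j -> x < j ->
    e i j -> ~~ e x j -> e i x.

Definition triangle_free n (e : rel 'I_n) : Prop :=
  forall a b c : 'I_n, ~ [&& e a b, e b c & e a c].

Definition has_edge n (e : rel 'I_n) : Prop := exists u v : 'I_n, e u v.

Definition is_initial_segment n (S : {set 'I_n}) (k : nat) : Prop :=
  forall v : 'I_n, (v \in S) = (v < k).

(* Main.v *)
Require Import Defs.
From mathcomp Require Import all_boot.

Lemma card_initial n k (Hk : k <= n) : #|[set v : 'I_n | v < k]| = k.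
Proof.
have -> : [set v : 'I_n | v < k] = [set widen_ord Hk i | i : 'I_k].
  apply/setP=> v; rewrite inE; apply/idP/imsetP.
    by move=> hv; exists (Ordinal hv) => //; apply/val_inj.
  by case=> i _ ->; rewrite /= ltn_ord.
rewrite card_imset ?card_ord //.
by move=> i j /(congr1 val) /= h; apply/val_inj.
Qed.

Theorem lemma1p2 (n : nat) (e : rel 'I_n) :
  simple_graph e -> has_edge e -> partially_shifted e -> triangle_free e ->
  exists X Y : {set 'I_n},
    [/\ [disjoint X & Y], X != set0, Y != set0,
        is_initial_segment (X :|: Y) (#|X| + #|Y|) &
        forall u v : 'I_n,
          e u v <-> (u \in X /\ v \in Y) \/ (u \in Y /\ v \in X)].
Proof.
move=> [sym irr] [u0 [v0 e0]] sh tf.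
have tri : forall u v w, e u v -> e v w -> e u w -> False.
  by move=> u v w h1 h2 h3; apply: (tf u v w); rewrite h1 h2 h3.
pose P := fun v : 'I_n => [exists w, e v w].
have Pu0 : P u0 by apply/existsP; exists v0.
case: (arg_maxnP (fun i : 'I_n => val i) Pu0) => m /existsP [a ema] mmax.
have maxP : forall u v, e u v -> u <= m.
  by move=> u v huv; apply: mmax; apply/existsP; exists v.
have eam : e a m by rewrite sym.
have am : a != m by apply/eqP=> h; move: ema; rewrite h irr.
have cover : forall x : 'I_n, x <= m -> e m x || e a x.
  move=> x hx.
  case: (eqVneq x m) => [->|xm]; first by rewrite eam orbT.
  case: (eqVneq x a) => [->|xa]; first by rewrite ema.
  case E: (e m x) => //=.
  apply: (sh a m x) => //; first by rewrite eq_sym.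
  - by rewrite ltn_neqAle hx andbT; apply/eqP=> /val_inj /eqP; rewrite (negbTE xm).
  - by rewrite sym E.
have disj : forall x, e m x -> e a x -> False.
  by move=> x h1 h2; apply: (tri a m x).
have leq_m : forall x y, e x y -> y <= m by move=> x y h; apply: (maxP y x); rewrite sym.
exists [set v | e m v], [set v | e a v]; split.
- apply/pred0P=> x /=; rewrite !inE; apply/negbTE/negP=> /andP [h1 h2]; exact: disj h1 h2.
- by apply/set0Pn; exists a; rewrite inE.
- by apply/set0Pn; exists m; rewrite inE.
- have HU : [set v | e m v] :|: [set v | e a v] = [set v : 'I_n | v < m.+1].
    apply/setP=> v; rewrite !inE ltnS; apply/idP/idP.
      by case/orP=> h; [apply: (leq_m m)|apply: (leq_m a)].
    exact: cover.
  have -> : #|[set v | e m v]| + #|[set v | e a v]| = m.+1.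
    rewrite -cardsUI HU card_initial ?ltn_ord //.
    suff -> : [set v | e m v] :&: [set v | e a v] = set0 by rewrite cards0 addn0.
    apply/setP=> x; rewrite !inE; apply/negbTE/negP=> /andP [h1 h2]; exact: disj h1 h2.
  by move=> v; rewrite HU inE.
- move=> u v; rewrite !inE; split.
  + move=> huv.
    have hu := maxP u v huv; have hv := leq_m u v huv.
    case/orP: (cover u hu) => hmu.
      case/orP: (cover v hv) => hv'; last by left.
      by exfalso; apply: (tri m u v).
    case/orP: (cover v hv) => hv'; first by right.
    by exfalso; apply: (tri a u v).
  + have key : forall u v, e m u -> e a v -> e u v.
      move=> u' v' h1 h2.
      case: (eqVneq u' a) => [->|ua]; first by [].
      case: (eqVneq v' m) => [->|vm]; first by rewrite sym.
      case E: (e v' m); first by exfalso; apply: (tri a v' m).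
      apply: (sh u' m v').
      * by apply/eqP=> h; move: h1; rewrite h irr.
      * by apply/eqP=> h; apply: (disj u'); rewrite // h.
      * by [].
      * by rewrite ltn_neqAle (leq_m a) // andbT; apply/eqP=> /val_inj /eqP; rewrite (negbTE vm).
      * by rewrite sym.
      * by rewrite E.
    case=> [[h1 h2]|[h1 h2]]; first exact: key.
    by rewrite sym; apply: key.
Qed.
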